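(* Let $n\ge 3$. For an SSM-recurrent configuration $c$ on $W_n$, let $\Phi_W(c)=(\mathcal O,M)$ where $\mathcal O=\mathcal O(m(c))$ and $M$ is the set of vertices $i\in[n]$ with $c_i=2$ that are not cyclically first maximal vertices of $c$. Then $\Phi_W$ is a bijection from the set of SSM-recurrent configurations on $W_n$ to the set $\mathrm{PMO}(C_n)$ of properly-marked orientations of $C_n$. Moreover $\mathrm{level}(c)=|M|$ and $\mathrm{weight}^{01^*}(c)$ equals the number of clockwise-directed edges of $\mathcal O$.
   Context: $C_n$: cycle on $[n]$ with edges $\{i,i+1\}$ (indices mod $n$, vertices arranged clockwise); $W_n$: $C_n$ plus sink $0$ adjacent to all of $[n]$. Stable configurations on $W_n$ are $c\in\{0,1,2\}^n$. SSM (parameter $p\in(0,1)$: a toppling vertex sends a grain to each neighbour independently with probability $p$, grains to the sink vanish); its Markov chain adds a grain at a random vertex and stabilises; SSM-recurrent = recurrent state; known: stable $c$ is SSM-recurrent iff for all $i,j$ with $c_i=c_j=0$ some $k\in(i,j)$ has $c_k=2$, where $(i,j)$ is the set of vertices strictly between $i$ and $j$ clockwise from $i$ to $j$ and $(i,i)=[n]\setminus\{i\}$. Minimal SSM-recurrent: no other SSM-recurrent configuration is componentwise $\le c$. Level: $\mathrm{level}(c)=\sum_i c_i-n$. A vertex $i$ is cyclically first maximal in $c$ if $c_i=2$ and there is $j$ with $c_j=0$ and $c_k=1$ for all $k\in(j,i)$. Canonical minimal configuration $m(c)$: $m(c)_i=0$ if $c_i=0$, $2$ if $i$ is cyclically first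 maximal, $1$ otherwise. For a minimal SSM-recurrent $c'$, $\mathcal O(c')$ is the unique orientation of $C_n$ with in-degree $c'_i$ at every vertex $i$ if $c'\ne(1,\ldots,1)$, and the counter-clockwise directed cycle ($i+1\to i$ for all $i$) if $c'=(1,\ldots,1)$. An edge $\{i,i+1\}$ is clockwise if directed $i\to i+1$, counter-clockwise if $i+1\to i$. A properly-marked orientation of $C_n$ is a pair $(\mathcal O,M)$, $\mathcal O$ an orientation of $C_n$ and $M\subseteq[n]$, such that every $i\in M$ satisfies $i+1\to i\to i-1$ in $\mathcal O$, and $\mathcal O$ has at least one counter-clockwise edge. A $01^*$-chain of $c$ is a set of consecutive vertices $j,j+1,\ldots,j+k$ with $c_j=0$ and $c_{j'}=1$ for $j<j'\le j+k$; $\mathrm{weight}^{01^*}(c)$ is the number of vertices $i$ belonging to some $01^*$-chain (i.e. $c_i=0$, or $c_i=1$ and there is $j$ with $c_j=0$ and $c_k=1$ for all $k$ in the clockwise half-open interval $(j,i]$). *)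

(* Defs.v *)
From mathcomp Require Import all_boot all_order all_algebra.
Set Implicit Arguments. Unset Strict Implicit. Unset Printing Implicit Defensive.

(* Vertices of C_n: 'I_n, vertex k of 'I_n stands for vertex k+1 of [n].
   Clockwise successor i+1 is ordS i, predecessor i-1 is ord_pred i.
   Edge {i, i+1} is indexed by i. *)

Section Defs.
Variable n : nat.

Definition config := {ffun 'I_n -> 'I_3}.
Definition cv (c : config) (i : 'I_n) : nat := nat_of_ord (c i).

Definition cdist (i j : 'I_n) : nat := (j + n - i) %% n.

(* k belongs to the open clockwise interval (i,j); (i,i) = [n] \ {i} *)
Definition in_open (i j k : 'I_n) : bool :=
  (0 < cdist i k) && (cdist i k < (if i == j then n else cdist i j)).

(* SSM-recurrence, via the known characterisation *)
Definition ssm_recurrent (c : config) : bool :=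
  [forall i, forall j, (cv c i == 0) && (cv c j == 0) ==>
     [exists k, in_open i j k && (cv c k == 2)]].

Definition level (c : config) : int := (\sum_i cv c i)%:Z - n%:Z.

Definition cyc_first_max (c : config) (i : 'I_n) : bool :=
  (cv c i == 2) &&
  [exists j, (cv c j == 0) && [forall k, in_open j i k ==> (cv c k == 1)]].

Definition mcan (c : config) (i : 'I_n) : nat :=
  if cv c i == 0 then 0 else if cyc_first_max c i then 2 else 1.

(* orientation: o i = true iff edge {i,i+1} is directed i -> i+1 (clockwise) *)
Definition orientation := {ffun 'I_n -> bool}.

Definition indeg (o : orientation) (i : 'I_n) : nat :=
  (o (ord_pred i) : nat) + (~~ o i : nat).

Definition ccw_cycle : orientation := [ffun=> false].

(* O(c') for a minimal recurrent c' : the unique orientation with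
   in-degree c'_i, or the counter-clockwise cycle if c' = (1,...,1). *)
Definition orient_of (c' : 'I_n -> nat) : orientation :=
  if [forall i, c' i == 1] then ccw_cycle
  else odflt ccw_cycle [pick o : orientation | [forall i, indeg o i == c' i]].

Definition clockwise_edges (o : orientation) : nat := #|[set i | o i]|.

Definition properly_marked (p : orientation * {set 'I_n}) : bool :=
  [forall i, (i \in p.2) ==> (~~ p.1 i && ~~ p.1 (ord_pred i))] &&
  [exists i, ~~ p.1 i].

Definition marks (c : config) : {set 'I_n} :=
  [set i | (cv c i == 2) && ~~ cyc_first_max c i].

Definition PhiW (c : config) : orientation * {set 'I_n} :=
  (orient_of (mcan c), marks c).

Definition in_01chain (c : config) (i : 'I_n) : bool :=
  (cv c i == 0) ||
  ((cv c i == 1) &&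
   [exists j, (cv c j == 0) && [forall k, in_open j i k ==> (cv c k == 1)]]).

Definition weight01 (c : config) : nat := #|[set i | in_01chain c i]|.

End Defs.

(* Main.v *)
Require Import Defs.
From mathcomp Require Import all_boot all_order all_algebra.
From mathcomp Require Import zify.
Set Implicit Arguments. Unset Strict Implicit. Unset Printing Implicit Defensive.

Section Arith.
Variable n : nat.
Hypothesis hn : 3 <= n.

Lemma valS (i : 'I_n) : nat_of_ord (ordS i) = if i.+1 < n then i.+1 else 0.
Proof.
clear hn.
rewrite /=; have h2 := ltn_ord i; case: ltnP => h1.
  by rewrite modn_small.
have -> : i.+1 = n by lia.
by rewrite modnn.
Qed.

Lemma valP (i : 'I_n) : nat_of_ord (ord_pred i) = if i == 0 :> nat then n.-1 else i.-1.
Proof.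
clear hn.
rewrite /=; have h2 := ltn_ord i; case: eqP => h1.
  by rewrite h1 add0n modn_small //; lia.
have -> : (i + n).-1 = i.-1 + n by lia.
by rewrite modnDr modn_small //; lia.
Qed.

Lemma cdistE (i j : 'I_n) : cdist i j = if i <= j then j - i else j + n - i.
Proof.
clear hn.
rewrite /cdist; have h1 := ltn_ord i; have h2 := ltn_ord j; case: leqP => h.
  have -> : j + n - i = (j - i) + n by lia.
  by rewrite modnDr modn_small //; lia.
by rewrite modn_small //; lia.
Qed.

Lemma in_openE (i j k : 'I_n) : in_open i j k =
  (0 < cdist i k) && (cdist i k < (if nat_of_ord i == nat_of_ord j then n else cdist i j)).
Proof. by []. Qed.

Ltac split_ifs := repeat match goal with
 | |- context [if ?b then _ else _] => let E := fresh "E" in case E: b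
 | H : context [if ?b then _ else _] |- _ => let E := fresh "E" in case E: b in H
end.

Lemma ord_eqE (a b : 'I_n) : (a == b) = (nat_of_ord a == nat_of_ord b).
Proof. by []. Qed.

Ltac bounds := repeat match goal with x : ordinal _ |- _ =>
  lazymatch goal with
  | _ : is_true (nat_of_ord x < _) |- _ => fail
  | _ => let H := fresh "B" in have H := ltn_ord x end end.

Ltac arith := bounds;
  repeat match goal with H : is_true _ |- _ => revert H | H : _ = _ |- _ => revert H | H : ~ _ |- _ => revert H end;
  rewrite ?ord_eqE ?in_openE ?cdistE ?valS ?valP; intros;
  split_ifs; lia.

Lemma open_S (i k : 'I_n) : in_open i (ordS i) k = false.
Proof. arith. Qed.

Lemma open_S2 (i j k : 'I_n) : j != i ->
  in_open j (ordS i) k = in_open j i k || (k == i).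
Proof. move=> H; arith. Qed.

Lemma pred_open (i j : 'I_n) : (ord_pred j == i) || in_open i j (ord_pred j).
Proof. arith. Qed.

Lemma walk (i0 j : 'I_n) (P : pred 'I_n) : P i0 ->
  (forall k, in_open i0 j k -> P (ord_pred k) -> P k) ->
  forall k, (k == i0) || in_open i0 j k -> P k.
Proof.
move=> H0 Hs.
suff H : forall t k, cdist i0 k = t -> (k == i0) || in_open i0 j k -> P k.
  by move=> k; exact: H.
elim=> [|t IH] k Hk Hin.
  have /eqP -> : k == i0 by arith.
  done.
have Hin' : in_open i0 j k by arith.
apply: Hs => //; apply: IH; arith.
Qed.

Lemma walk_all (i0 : 'I_n) (P : pred 'I_n) : P i0 ->
  (forall k, P (ord_pred k) -> P k) -> forall k, P k.
Proof.
move=> H0 Hs k; apply: (@walk i0 i0 P H0).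
  by move=> k' _; apply: Hs.
arith.
Qed.

End Arith.

Section Main.
Variable n : nat.
Hypothesis hn : 3 <= n.

Definition Z (c : config n) (i : 'I_n) : bool :=
  [exists j, (cv c j == 0) && [forall k, in_open j i k ==> (cv c k == 1)]].

Lemma cfmE (c : config n) i : cyc_first_max c i = (cv c i == 2) && Z c i.
Proof. by []. Qed.

Lemma chainE (c : config n) i : in_01chain c i = (cv c i == 0) || (cv c i == 1) && Z c i.
Proof. by []. Qed.

Lemma cv_lt3 (c : config n) i : cv c i < 3.
Proof. exact: ltn_ord. Qed.

Lemma ZS (c : config n) i : Z c (ordS i) = (cv c i == 0) || (cv c i == 1) && Z c i.
Proof.
apply/idP/idP.
- case/existsP=> j /andP[hj /forallP hk].
  case: (eqVneq j i) => [<-|ne]; first by rewrite hj.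
  have := implyP (hk i); rewrite open_S2 // eqxx orbT => /(_ isT) ->.
  apply/orP; right; apply/existsP; exists j; rewrite hj /=.
  apply/forallP=> k; apply/implyP=> hk'; have := implyP (hk k).
  by rewrite open_S2 // hk' /= => /(_ isT).
- case/orP.
  + move=> h0; apply/existsP; exists i; rewrite h0 /=; apply/forallP=> k.
    by rewrite open_S.
  + case/andP=> h1 /existsP[j /andP[hj /forallP hk]].
    have ne : j != i by apply/eqP => E; subst j; rewrite (eqP hj) in h1.
    apply/existsP; exists j; rewrite hj /=; apply/forallP=> k.
    rewrite open_S2 //; apply/implyP => /orP[h|/eqP->] //.
    exact: (implyP (hk k) h).
Qed.

Lemma rec_Z0 (c : config n) (hc : ssm_recurrent c) i : cv c i == 0 -> ~~ Z c i.
Proof.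
move=> h0; apply/negP => /existsP[j /andP[hj /forallP hk]].
have := implyP (forallP (forallP hc j) i); rewrite hj h0 /= => /(_ isT).
case/existsP=> k /andP[ho h2].
by have := implyP (hk k) ho; rewrite (eqP h2).
Qed.

Definition Zo (c : config n) : orientation n := [ffun i => Z c (ordS i)].

Lemma indeg_Zo (c : config n) (hc : ssm_recurrent c) i : indeg (Zo c) i = mcan c i.
Proof.
rewrite /indeg !ffunE ord_predK ZS /mcan cfmE.
have := @rec_Z0 c hc i; have := @cv_lt3 c i.
case: (Z c i); case: (cv c i) => [|[|[|m]]] //=.
by move=> _ /(_ (eqxx 0)).
Qed.

Lemma orient_unique (o o' : orientation n) :
  (forall i, indeg o i = indeg o' i) -> o = o' \/ (forall i, indeg o i = 1).
Proof.
move=> h.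
case: (boolP [forall i, o i == o' i]) => [/forallP hh|].
  by left; apply/ffunP=> i; exact/eqP.
rewrite negb_forall => /existsP[i0 hi0]; right.
case E: (o i0) in hi0.
- have P0 : o i0 && ~~ o' i0 by rewrite E; move: hi0; case: (o' i0).
  have H := @walk_all n hn i0 (fun i => o i && ~~ o' i) P0.
  have {}H : forall i, o i && ~~ o' i.
    apply: H => k /andP[a b]; have := h k; rewrite /indeg a (negbTE b).
    by case: (o k); case: (o' k).
  move=> i; have /andP[a _] := H (ord_pred i); have /andP[b _] := H i.
  by rewrite /indeg a b.
- have P0 : ~~ o i0 && o' i0 by rewrite E; move: hi0; case: (o' i0).
  have H := @walk_all n hn i0 (fun i => ~~ o i && o' i) P0.
  have {}H : forall i, ~~ o i && o' i.
    apply: H => k /andP[a b]; have := h k; rewrite /indeg (negbTE a) b.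
    by case: (o k); case: (o' k).
  move=> i; have /andP[a _] := H (ord_pred i); have /andP[b _] := H i.
  by rewrite /indeg (negbTE a) (negbTE b).
Qed.

Lemma orient_Zo (c : config n) (hc : ssm_recurrent c) : orient_of (mcan c) = Zo c.
Proof.
rewrite /orient_of; case: ifP => [/forallP hall | hnall].
  apply/ffunP => i; rewrite /ccw_cycle !ffunE.
  apply/esym/negbTE/negP => /existsP[j /andP[hj _]].
  by have := hall j; rewrite /mcan hj.
case: pickP => [o /forallP ho | hnone] /=.
  have [//|hall1] := @orient_unique o (Zo c) (fun i => etrans (eqP (ho i)) (esym (indeg_Zo hc i))).
  move/negP: hnall; case; apply/forallP => i.
  by rewrite -(eqP (ho i)) hall1.
have := hnone (Zo c) => /negP; case; apply/forallP => i.
by rewrite indeg_Zo.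
Qed.

Lemma cv_rec (c : config n) (hc : ssm_recurrent c) i :
  cv c i = indeg (orient_of (mcan c)) i + (i \in marks c).
Proof.
rewrite orient_Zo // indeg_Zo // /mcan /marks inE cfmE.
have := @cv_lt3 c i.
by case: (Z c i); case: (cv c i) => [|[|[|m]]].
Qed.

Lemma sum_indeg (o : orientation n) : \sum_i indeg o i = n.
Proof.
have E1 : \sum_i nat_of_bool (o (ord_pred i)) = \sum_i nat_of_bool (o i).
  by rewrite [RHS](reindex_inj (@ord_pred_inj n)).
have E2 : \sum_i (nat_of_bool (o i) + nat_of_bool (~~ o i)) = \sum_(i < n) 1.
  by apply: eq_bigr => i _; case: (o i).
rewrite big_split /= in E2.
by rewrite /indeg big_split /= E1 E2 sum1_card card_ord.
Qed.

Lemma sum_mem (M : {set 'I_n}) : \sum_i nat_of_bool (i \in M) = #|M|.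
Proof.
rewrite -sum1_card [RHS]big_mkcond; apply: eq_bigr => i _.
by case: (i \in M).
Qed.


Definition mkc (o : orientation n) (M : {set 'I_n}) : config n :=
  [ffun i => inord (indeg o i + (i \in M))].

Lemma pm_mark (o : orientation n) M : properly_marked (o, M) ->
  forall i, i \in M -> (~~ o i) && ~~ o (ord_pred i).
Proof. by case/andP => /forallP h _ i hi; exact: (implyP (h i) hi). Qed.

Lemma cv_mkc (o : orientation n) M (hp : properly_marked (o, M)) i :
  cv (mkc o M) i = indeg o i + (i \in M).
Proof.
rewrite /cv ffunE inordK //; case hi: (i \in M).
  by have /andP[a b] := pm_mark hp hi; rewrite /indeg (negbTE a) (negbTE b).
by rewrite /indeg; case: (o _); case: (o i).
Qed.

Lemma ho_rec (o : orientation n) M (hp : properly_marked (o, M)) i :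
  o i = (cv (mkc o M) i == 0) || (cv (mkc o M) i == 1) && o (ord_pred i).
Proof.
rewrite cv_mkc //; case hi: (i \in M).
  by have /andP[a b] := pm_mark hp hi; rewrite /indeg (negbTE a) (negbTE b).
by rewrite /indeg addn0; case: (o i); case: (o (ord_pred i)).
Qed.

Lemma Zo_mkc (o : orientation n) M (hp : properly_marked (o, M)) :
  Zo (mkc o M) = o.
Proof.
set c := mkc o M.
apply/ffunP => i; rewrite ffunE.
case: (boolP [exists i, cv c i == 0]) => [/existsP[i0 h0] | /existsPn nz].
  have P0 : Z c (ordS i0) == o i0 by rewrite ZS (ho_rec hp i0) h0.
  have H : forall k, Z c (ordS k) == o k.
    apply: (@walk_all n hn i0 (fun i => Z c (ordS i) == o i) P0) => k /eqP IH.
    by rewrite ord_predK in IH; rewrite ZS (ho_rec hp k) IH.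
  exact: (eqP (H i)).
have -> : Z c (ordS i) = false.
  by apply/negbTE/negP => /existsP[j /andP[hj _]]; have := nz j; rewrite hj.
have [i1 hi1] : exists i1, ~~ o i1.
  by case/andP: hp => _ /existsP[i1 h]; exists i1.
have H : forall k, ~~ o k.
  apply: (@walk_all n hn i1 (fun i => ~~ o i) hi1) => k hk.
rewrite (ho_rec hp k) (negbTE (nz k)) /=.
  by apply/negP => /andP[_ h]; move/negP: hk.
exact: (esym (negbTE (H i))).
Qed.

Lemma rec_mkc (o : orientation n) M (hp : properly_marked (o, M)) :
  ssm_recurrent (mkc o M).
Proof.
set c := mkc o M.
apply/forallP => i; apply/forallP => j; apply/implyP => /andP[hi hj].
case: (boolP [exists k, in_open i j k && (cv c k == 2)]) => // /existsPn hno.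
have Pi : o i by rewrite (ho_rec hp i) hi.
have H : forall k, (k == i) || in_open i j k -> o k.
  apply: (@walk n hn i j (fun k => o k) Pi).
  move=> k hk hpk; rewrite (ho_rec hp k).
  have := hno k; rewrite hk /= => h2.
  have := @cv_lt3 c k; move: h2.
  by case: (cv c k) => [|[|[|m]]] //=; rewrite hpk.
have := H _ (pred_open hn i j).
move: hj; rewrite cv_mkc // /indeg.
by case: (o (ord_pred j)).
Qed.

Lemma PhiW_mkc (o : orientation n) M (hp : properly_marked (o, M)) :
  PhiW (mkc o M) = (o, M).
Proof.
have hc := rec_mkc hp.
rewrite /PhiW orient_Zo // Zo_mkc //; congr pair.
apply/setP => i; rewrite /marks inE cfmE.
have -> : Z (mkc o M) i = o (ord_pred i).
  by have := congr1 (fun f : orientation n => f (ord_pred i)) (Zo_mkc hp); rewrite /= ffunE ord_predK.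
rewrite cv_mkc //; case hi: (i \in M).
  by have /andP[a b] := pm_mark hp hi; rewrite /indeg (negbTE a) (negbTE b).
by rewrite /indeg addn0; case: (o i); case: (o (ord_pred i)).
Qed.

End Main.

Unset Implicit Arguments.
Theorem mainTheorem6 (n : nat) (hn : 3 <= n) :
  {in [pred c : config n | ssm_recurrent c] &, injective (@PhiW n)} /\
  (forall c : config n, ssm_recurrent c -> properly_marked (PhiW c)) /\
  (forall p : orientation n * {set 'I_n}, properly_marked p ->
     exists2 c : config n, ssm_recurrent c & PhiW c = p) /\
  (forall c : config n, ssm_recurrent c ->
     level c = Posz #|(PhiW c).2| /\
     weight01 c = clockwise_edges (PhiW c).1).
Proof.
split; last split; last split.
- move=> c1 c2; rewrite !inE => h1 h2 E.
  apply/ffunP => i; apply: val_inj.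
  have := cv_rec hn h1 i; have := cv_rec hn h2 i.
  rewrite /PhiW in E; case: E => E1 E2.
  move=> e2 e1; change (nat_of_ord (c1 i) = nat_of_ord (c2 i)).
  by rewrite /cv in e1 e2; rewrite e1 e2 E1 E2.
- move=> c hc; rewrite /properly_marked /PhiW /= orient_Zo //.
  apply/andP; split.
    apply/forallP => i; apply/implyP; rewrite /marks inE cfmE => /andP[/eqP h2 hZ].
    rewrite !ffunE ord_predK (ZS hn) h2 /=.
    by rewrite h2 /= in hZ.
  case: (boolP [exists i, ~~ Zo c i]) => // /existsPn hall.
  have := hall (Ordinal (leq_trans (isT : 0 < 3) hn)); rewrite ffunE negbK => /existsP[j /andP[hj _]].
  have := hall (ord_pred j); rewrite ffunE ord_predK negbK.
  by move/negP: (rec_Z0 hc hj).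
- case=> o M hp; exists (mkc o M); first exact: rec_mkc.
  exact: PhiW_mkc.
- move=> c hc; split.
    have E : \sum_i cv c i = n + #|(PhiW c).2|.
      rewrite (eq_bigr _ (fun i _ => cv_rec hn hc i)) big_split /=.
      by rewrite sum_indeg // sum_mem.
    by rewrite /level E; lia.
  rewrite /= orient_Zo // /weight01 /clockwise_edges; apply: eq_card => i.
  by rewrite !inE ffunE ZS.
Qed.
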